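(* Consider the two-source game ($m=2$) with $n_1\ge n_2\ge 0$, $n_1\ge 1$, and any $\phi>0$, $\mu>0$, $q\in[0,1]$. There exists a (pure) Nash equilibrium in which $u_1>0$ and $u_2=n_2$, where $u_i$ denotes the number of users of $N_i$ choosing the direct path.
   Context: Two-source network: sources $s_1,s_2$ and destination $d$; source $s_i$ has a set $N_i$ of $n_i$ users. Each user generates an independent Poisson flow of packets of rate $\phi>0$; each direct link $(s_i,d)$ has service rate $\mu>0$; the sidelink between $s_1$ and $s_2$ loses packets independently with probability $q$, and $\bar q=1-q$. Only pure strategies are considered: a user of $N_1$ chooses DP $(s_1,d)$ or IP $(s_1,s_2,d)$; a user of $N_2$ chooses DP $(s_2,d)$ or IP $(s_2,s_1,d)$. With $u_i$ users of $N_i$ on DP, $T_1=u_1\phi+(n_2-u_2)\bar q\phi$ and $T_2=u_2\phi+(n_1-u_1)\bar q\phi$. The loss rate of a user of $N_i$ is $\phi\frac{T_i}{T_i+\mu}$ on DP and $\phi\left(q+\bar q\frac{T_j}{T_j+\mu}\right)$ on IP to $s_j$, $j\neq i$. A Nash equilibrium is a pure profile in which no user can strictly decrease its loss rate by unilaterally switching its route. *)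

(* Defs.v *)
From mathcomp Require Import all_boot all_order all_algebra.
Set Implicit Arguments. Unset Strict Implicit. Unset Printing Implicit Defensive.
Import Order.TTheory GRing.Theory Num.Theory.
Local Open Scope ring_scope.

(* Two-source game. A pure profile: for each user of N_1 (indexed by 'I_n1)
   and each user of N_2 (indexed by 'I_n2), a boolean: true = DP, false = IP. *)
Section Game.
Variable R : realFieldType.
Variables (phi mu q : R).

Definition ndp (n : nat) (s : {ffun 'I_n -> bool}) : nat := #|[set i | s i]|.

Definition load1 (n2 u1 u2 : nat) : R :=
  u1%:R * phi + (n2 - u2)%:R * (1 - q) * phi.
Definition load2 (n1 u1 u2 : nat) : R :=
  u2%:R * phi + (n1 - u1)%:R * (1 - q) * phi.

Definition loss_dp (T : R) : R := phi * (T / (T + mu)).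
Definition loss_ip (T' : R) : R := phi * (q + (1 - q) * (T' / (T' + mu))).

Definition loss1 n1 n2 (s1 : {ffun 'I_n1 -> bool}) (s2 : {ffun 'I_n2 -> bool})
  (i : 'I_n1) : R :=
  let u1 := ndp s1 in let u2 := ndp s2 in
  if s1 i then loss_dp (load1 n2 u1 u2) else loss_ip (load2 n1 u1 u2).

Definition loss2 n1 n2 (s1 : {ffun 'I_n1 -> bool}) (s2 : {ffun 'I_n2 -> bool})
  (j : 'I_n2) : R :=
  let u1 := ndp s1 in let u2 := ndp s2 in
  if s2 j then loss_dp (load2 n1 u1 u2) else loss_ip (load1 n2 u1 u2).

Definition deviate n (s : {ffun 'I_n -> bool}) (i : 'I_n) (b : bool)
  : {ffun 'I_n -> bool} := [ffun k => if k == i then b else s k].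

Definition is_NE n1 n2 (s1 : {ffun 'I_n1 -> bool}) (s2 : {ffun 'I_n2 -> bool}) :=
  (forall (i : 'I_n1) (b : bool),
      ~ (loss1 (deviate s1 i b) s2 i < loss1 s1 s2 i)) /\
  (forall (j : 'I_n2) (b : bool),
      ~ (loss2 s1 (deviate s2 j b) j < loss2 s1 s2 j)).
End Game.

(* Main.v *)
Require Import Defs.
From mathcomp Require Import all_boot all_order all_algebra ring lra zify.
Import Order.TTheory GRing.Theory Num.Theory.
Local Open Scope ring_scope.

Lemma card_lt n u : (u <= n)%N -> #|[set i : 'I_n | (i < u)%N]| = u.
Proof.
move=> hu; rewrite cardsE cardE /enum_mem -enumT /= size_filter.
rewrite -(count_map val (fun i => i < u)%N) val_enum_ord.
rewrite -[n](subnKC hu) iotaD count_cat.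
rewrite (eq_in_count (a2 := predT)); last by move=> x; rewrite mem_iota.
rewrite count_predT size_iota.
rewrite (eq_in_count (a2 := pred0)); last first.
  by move=> x; rewrite mem_iota /= add0n => /andP[h _]; rewrite ltnNge h.
by rewrite count_pred0 addn0.
Qed.

Lemma ndp_dev n (s : {ffun 'I_n -> bool}) i b :
  (ndp (deviate s i b) + s i = ndp s + b)%N.
Proof.
rewrite /ndp (cardsD1 i [set k | deviate s i b k]) (cardsD1 i [set k | s k]).
rewrite !inE /deviate ffunE eqxx.
have -> : [set k | [ffun k0 => if k0 == i then b else s k0] k] :\ i = [set k | s k] :\ i.
  by apply/setP => k; rewrite !inE ffunE; case: (k == i).
by case: b; case: (s i) => /=; rewrite ?addnS ?addSn ?addn0 ?add0n.
Qed.

Lemma dev_at n (s : {ffun 'I_n -> bool}) i b : deviate s i b i = b.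
Proof. by rewrite /deviate ffunE eqxx. Qed.


Lemma key (R : realFieldType) (phi mu q T T' : R) : 0 < mu -> 0 <= T -> 0 <= T' ->
  loss_ip phi mu q T' - loss_dp phi mu T =
  phi * mu * ((T' + mu) - (1 - q) * (T + mu)) / ((T + mu) * (T' + mu)).
Proof.
move=> hmu hT hT'; have h1 : T + mu != 0 by apply: lt0r_neq0; lra.
have h2 : T' + mu != 0 by apply: lt0r_neq0; lra.
rewrite /loss_ip /loss_dp; field; apply/andP; split => //.
Qed.

Lemma L1 (R : realFieldType) (phi mu q T T' : R) : 0 < phi -> 0 < mu ->
  0 <= T -> 0 <= T' -> (1 - q) * (T + mu) <= T' + mu ->
  loss_dp phi mu T <= loss_ip phi mu q T'.
Proof.
move=> hphi hmu hT hT' h; rewrite -subr_ge0 key //.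
apply: divr_ge0; last by apply: mulr_ge0; lra.
apply: mulr_ge0; first by apply: mulr_ge0; lra.
lra.
Qed.

Lemma L2 (R : realFieldType) (phi mu q T T' : R) : 0 < phi -> 0 < mu ->
  0 <= T -> 0 <= T' -> T' + mu <= (1 - q) * (T + mu) ->
  loss_ip phi mu q T' <= loss_dp phi mu T.
Proof.
move=> hphi hmu hT hT' h; rewrite -subr_le0 key //.
apply: mulr_le0_ge0; last by rewrite invr_ge0; apply: mulr_ge0; lra.
apply: mulr_ge0_le0; first by apply: mulr_ge0; lra.
lra.
Qed.

Lemma pick (P : nat -> bool) n : (1 <= n)%N -> P 1%N ->
  exists u, [/\ (1 <= u <= n)%N, P u & ((u < n)%N -> ~~ P u.+1)].
Proof.
elim: n => [//|n IH] _ P1.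
case: n IH => [|n] IH.
  by exists 1%N; split.
have [u [hu Pu hn]] := IH isT P1.
case: (ltnP u n.+1) => hlt.
  exists u; split; [lia | exact: Pu | by move=> _; apply: hn].
have eu : u = n.+1 by lia.
case hP: (P n.+2).
  exists n.+2; split; [lia | exact: hP | by rewrite ltnn].
exists u; split; [lia | exact: Pu | by rewrite eu hP].
Qed.

Lemma load1_ge0 (R : realFieldType) (phi q : R) a b c : 0 < phi -> q <= 1 ->
  0 <= load1 phi q a b c.
Proof.
move=> hphi hq; rewrite /load1.
have h1 : 0 <= (b%:R : R) := ler0n _ _.
have h2 : 0 <= ((a - c)%:R : R) := ler0n _ _.
apply: addr_ge0; first by apply: mulr_ge0; lra.
apply: mulr_ge0; last lra.
apply: mulr_ge0; lra.
Qed.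

Lemma load2_ge0 (R : realFieldType) (phi q : R) a b c : 0 < phi -> q <= 1 ->
  0 <= load2 phi q a b c.
Proof. by move=> *; rewrite /load2 -/(load1 phi q a c b); apply: load1_ge0. Qed.

Theorem theorem5 (R : realFieldType) (n1 n2 : nat) (phi mu q : R) :
  (n2 <= n1)%N -> (1 <= n1)%N -> 0 < phi -> 0 < mu -> 0 <= q <= 1 ->
  exists (s1 : {ffun 'I_n1 -> bool}) (s2 : {ffun 'I_n2 -> bool}),
    is_NE phi mu q s1 s2 /\ (0 < ndp s1)%N /\ ndp s2 = n2.
Proof.
move=> hn21 hn1 hphi hmu /andP[hq0 hq1].
pose P u := (1 - q) * (load1 phi q n2 u n2 + mu) <= load2 phi q n1 u.-1 n2 + mu.
have P1 : P 1%N.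
  rewrite /P /load1 /load2 subnn subn0 /=.
  have h1 : (1 <= (n1%:R : R)) by rewrite ler1n.
  have : (1 - q) * phi <= n1%:R * (1 - q) * phi.
    by rewrite -mulrA ler_peMl //; apply: mulr_ge0; lra.
  have : 0 <= n2%:R * phi by apply: mulr_ge0; [exact: ler0n | lra].
  have : 0 <= q * mu by apply: mulr_ge0; lra.
  rewrite ?mul1r ?mul0r ?mulr0 ?addr0.
  nra.
have [u [/andP[hu1 hun] Pu hnP]] := pick _ _ hn1 P1.
pose s1 := [ffun i : 'I_n1 => (i < u)%N].
pose s2 := [ffun _ : 'I_n2 => true].
have hs1 : ndp s1 = u.
  rewrite /ndp -(card_lt _ _ hun); apply: eq_card => i; by rewrite !inE ffunE.
have hs2 : ndp s2 = n2.
  rewrite /ndp -[in RHS](card_ord n2); apply: eq_card => i; by rewrite !inE ffunE.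
exists s1, s2; split; last by rewrite hs1 hs2.
split.
- move=> i b; have e := ndp_dev _ s1 i b.
  rewrite /loss1 dev_at hs1 hs2; rewrite hs1 in e.
  apply/negP; rewrite -leNgt.
  move: e; move: (ndp (deviate s1 i b)) => nd e.
  have hsi : s1 i = (i < u)%N by rewrite ffunE.
  case: b e => e; case hiu: (i < u)%N; rewrite hsi hiu /= in e *.
  + by have -> : nd = u by lia.
  + have hlt : (u < n1)%N by have := ltn_ord i; lia.
    have -> : nd = u.+1 by lia.
    apply: L2 => //; [exact: load1_ge0 | exact: load2_ge0 |].
    by apply: ltW; move: (hnP hlt); rewrite /P -ltNge.
  + apply: L1 => //; [exact: load1_ge0 | exact: load2_ge0 |].
    by have -> : nd = u.-1 by lia.
  + by have -> : nd = u by lia.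
- move=> j b; have e := ndp_dev _ s2 j b.
  rewrite /loss2 dev_at hs1 hs2; rewrite hs2 in e.
  apply/negP; rewrite -leNgt.
  move: e; move: (ndp (deviate s2 j b)) => nd e.
  have hsj : s2 j = true by rewrite ffunE.
  rewrite hsj /= in e *.
  case: b e => e /=; first by have -> : nd = n2 by lia.
  apply: L1 => //; [exact: load2_ge0 | exact: load1_ge0 |].
  rewrite /load1 /load2.
  have -> : (n2 - nd = 1)%N by lia.
  have hx : 0 <= (u%:R : R) := ler0n _ _.
  have hz : 0 <= (n2%:R : R) := ler0n _ _.
  have hy : 0 <= ((n1 - u)%:R : R) := ler0n _ _.
  case: (ltnP u n1) => hlt.
    move: (hnP hlt); rewrite /P -ltNge /load1 /load2 subnn /= -natr1.
    set x := (u%:R : R) in hx *.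
    set y := ((n1 - u)%:R : R) in hy *.
    set z := (n2%:R : R) in hz *.
    move=> H.
    have ht0 : 0 <= 1 - q by lra.
    have H' := ltW H.
    have H2 : (1 - q) * (z * phi + y * (1 - q) * phi + mu) <=
              (1 - q) * ((1 - q) * ((x + 1) * phi + 0 * (1 - q) * phi + mu)).
      by rewrite ler_wpM2l.
    have h1 : 0 <= q * (2 - q) * x * phi.
      by apply: mulr_ge0; [apply: mulr_ge0; [apply: mulr_ge0|] |]; lra.
    have h2 : 0 <= q * (1 - q) * phi.
      by apply: mulr_ge0; [apply: mulr_ge0|]; lra.
    have h3 : 0 <= q * (2 - q) * mu.
      by apply: mulr_ge0; [apply: mulr_ge0|]; lra.
    nra.
  have eu : u = n1 by lia.
  have -> : (n1 - u = 0)%N by lia.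
  have hzx : (n2%:R : R) <= u%:R by rewrite ler_nat eu.
  set x := (u%:R : R) in hx hzx *.
  set z := (n2%:R : R) in hz hzx *.
  have h1 : 0 <= q * z * phi by apply: mulr_ge0; [apply: mulr_ge0|]; lra.
  rewrite ?mulr0n ?mulr1n.
  have h2 : 0 <= q * mu by apply: mulr_ge0; lra.
  have h3 : 0 <= (1 - q) * phi by apply: mulr_ge0; lra.
  have h4 : z * phi <= x * phi by apply: ler_wpM2r; lra.
  nra.
Qed.
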